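(* Let $(X,f,\mu)$ and $(Y,g,\nu)$ be ergodic probability measure preserving dynamical systems on relatively compact metric spaces $X$ and $Y$, with $g$ invertible, and let $h\colon X\to\mathbb Z$ be measurable with $\int_X h\,d\mu=0$. Let $F(x,y)=(f(x),g^{h(x)}(y))$ on $Z=X\times Y$, endowed with the sup metric $d$. Then for $\mu$-a.e. $x\in X$ and every $y\in Y$, \[ \limsup_{r\to0}\frac{\log\tau_r^F(x,y)}{-\log r}\le \limsup_{r\to0}\frac{\log\tau_r^{\widetilde F}(x)}{-\log r}. \]
   Context: Write $h_n=\sum_{k=0}^{n-1}h\circ f^k$, so that $F^n(x,y)=(f^n(x),g^{h_n(x)}(y))$. The first return time of $F$ is $\tau_r^F(z)=\inf\{n\ge1: d(F^n(z),z)<r\}$ for $z\in Z$, $r>0$. The $\mathbb Z$-extension is $\widetilde F\colon X\times\mathbb Z\to X\times\mathbb Z$, $\widetilde F(x,q)=(f(x),q+h(x))$, and its return time to the $r$-neighbourhood of the starting point (independent of $q$) is $\tau_r^{\widetilde F}(x)=\inf\{n\ge1: d(f^n(x),x)<r,\ h_n(x)=0\}$. *)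

(* Defs.v *)
From HB Require Import structures.
From mathcomp Require Import all_boot all_order all_algebra.
From mathcomp Require Import all_classical all_reals all_analysis.
Set Implicit Arguments. Unset Strict Implicit. Unset Printing Implicit Defensive.
Import Order.TTheory GRing.Theory Num.Theory.
Import numFieldTopology.Exports numFieldNormedType.Exports.
Local Open Scope classical_set_scope.
Local Open Scope ring_scope.

Section defs.
Variable R : realType.

Definition is_metric (T : Type) (d : T -> T -> R) : Prop :=
  [/\ forall x y, 0 <= d x y,
      forall x y, d x y = 0 <-> x = y,
      forall x y, d x y = d y x &
      forall x y z, d x z <= d x y + d y z].

(* relatively compact (= totally bounded: compact closure in the completion) *)
Definition totally_bounded (T : Type) (d : T -> T -> R) : Prop :=
  forall e : R, 0 < e -> exists (n : nat) (c : nat -> T),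
    forall x, exists i, (i < n)%N /\ d x (c i) < e.

Definition d_open (T : Type) (d : T -> T -> R) (A : set T) : Prop :=
  forall x, A x -> exists2 e : R, 0 < e & forall y, d x y < e -> A y.

Definition borel_for (dT : measure_display) (T : measurableType dT)
  (d : T -> T -> R) : Prop :=
  @measurable _ T = <<s d_open d >>.

Definition measure_preserving (dT : measure_display) (T : measurableType dT)
  (mu : probability T R) (f : T -> T) : Prop :=
  measurable_fun setT f /\
  forall A, measurable A -> mu (f @^-1` A) = mu A.

Definition ergodic (dT : measure_display) (T : measurableType dT)
  (mu : probability T R) (f : T -> T) : Prop :=
  measure_preserving mu f /\
  forall A, measurable A -> f @^-1` A = A -> mu A = 0%E \/ mu A = 1%E.

Definition iterz (T : Type) (g ginv : T -> T) (n : int) : T -> T :=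
  match n with
  | Posz k => iter k g
  | Negz k => iter k.+1 ginv
  end.

Definition hsum (X : Type) (f : X -> X) (h : X -> int) (n : nat) (x : X) : int :=
  \sum_(k < n) h (iter k f x).

Definition skewF (X Y : Type) (f : X -> X) (g ginv : Y -> Y) (h : X -> int)
  (z : X * Y) : X * Y :=
  (f z.1, iterz g ginv (h z.1) z.2).

Definition sup_metric (X Y : Type) (dX : X -> X -> R) (dY : Y -> Y -> R)
  (z w : X * Y) : R := Num.max (dX z.1 w.1) (dY z.2 w.2).

(* first return time (+oo if no return) *)
Definition return_time (T : Type) (d : T -> T -> R) (F : T -> T) (r : R) (z : T)
  : \bar R :=
  ereal_inf [set (n%:R)%:E | n in [set n : nat | (0 < n)%N /\ d (iter n F z) z < r]].

(* return time of the Z-extension to the r-neighbourhood *)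
Definition Zext_return_time (X : Type) (d : X -> X -> R) (f : X -> X)
  (h : X -> int) (r : R) (x : X) : \bar R :=
  ereal_inf [set (n%:R)%:E | n in [set n : nat |
     (0 < n)%N /\ d (iter n f x) x < r /\ hsum f h n x = 0]].

Definition elog (t : \bar R) : \bar R :=
  match t with
  | EFin a => (ln a)%:E
  | +oo%E => +oo%E
  | -oo%E => -oo%E
  end.

Definition rec_ratio (t : \bar R) (r : R) : \bar R :=
  (elog t * ((- ln r)^-1)%:E)%E.

Definition limsup_at0 (phi : R -> \bar R) : \bar R := limf_esup phi 0^'+.

End defs.

(* Main.v *)
Require Import Defs.
From HB Require Import structures.
From mathcomp Require Import all_boot all_order all_algebra.
From mathcomp Require Import all_classical all_reals all_analysis.
From mathcomp Require Import zify.
Import Order.TTheory GRing.Theory Num.Theory.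
Import numFieldTopology.Exports numFieldNormedType.Exports.
Local Open Scope classical_set_scope.
Local Open Scope ring_scope.

Section iz.
Variables (T : Type) (g ginv : T -> T).
Hypotheses (gK : cancel g ginv) (ginvK : cancel ginv g).

Lemma iterzS (b : int) y : iterz g ginv (b + 1) y = g (iterz g ginv b y).
Proof.
case: b => [k|k].
  by have -> : (Posz k + 1 = Posz k.+1)%R by lia.
case: k => [|k].
  by rewrite /= ginvK.
have -> : (Negz k.+1 + 1 = Negz k)%R by rewrite !NegzE; lia.
by rewrite /= ginvK.
Qed.

Lemma iterzP (b : int) y : iterz g ginv (b - 1) y = ginv (iterz g ginv b y).
Proof.
case: b => [k|k].
  case: k => [|k]; first by [].
  have -> : (Posz k.+1 - 1 = Posz k)%R by lia.
  by rewrite /= gK.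
have -> : (Negz k - 1 = Negz k.+1)%R by rewrite !NegzE; lia.
by [].
Qed.

Lemma iterzD (a b : int) y :
  iterz g ginv a (iterz g ginv b y) = iterz g ginv (a + b) y.
Proof.
case: a => [n|n].
  elim: n => [|n IH]; first by rewrite add0r.
  have -> : (Posz n.+1 + b = (Posz n + b) + 1)%R by lia.
  by rewrite iterzS -IH.
elim: n => [|n IH].
  have -> : (Negz 0 + b = b - 1)%R by rewrite NegzE; lia.
  by rewrite iterzP.
have -> : (Negz n.+1 + b = (Negz n + b) - 1)%R by rewrite !NegzE; lia.
by rewrite iterzP -IH.
Qed.
End iz.

Local Open Scope ereal_scope.
Lemma limf_esup_le (R : realType) (f g : R -> \bar R) (F : set_system R)
  (FF : Filter F) : (\forall r \near F, f r <= g r) -> limf_esup f F <= limf_esup g F.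
Proof.
move=> fg; apply: le_ereal_inf_tmp => _ [V FV <-].
have FW : F (V `&` [set r | f r <= g r]) by apply: filterI.
apply: (le_trans (ereal_inf_lbound _)); first by exists (V `&` [set r | f r <= g r]).
apply: ge_ereal_sup => _ [r [Vr fgr] <-].
apply: (le_trans fgr); apply: ereal_sup_ubound; by exists r.
Qed.

Lemma rec_ratio_le (R : realType) (s t : \bar R) (r : R) :
  (0 < r)%R -> (r <= 1)%R -> 1 <= s -> s <= t -> rec_ratio s r <= rec_ratio t r.
Proof.
move=> r0 r1 s1 st; rewrite /rec_ratio; apply: lee_wpmul2r.
  by rewrite lee_fin invr_ge0 oppr_ge0 ln_le0.
case: t st => [t| |] st; last first.
- by move: (le_trans s1 st).
- by rewrite /= leey.
case: s s1 st => [s| |] s1 st //=.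
rewrite lee_fin ler_ln ?posrE.
- by rewrite -lee_fin.
- by rewrite lee_fin in s1; rewrite (lt_le_trans _ s1).
- by rewrite lee_fin in s1 st; rewrite (lt_le_trans _ (le_trans s1 st)).
Qed.

Lemma iter_skewF (X Y : Type) (f : X -> X) (g ginv : Y -> Y) (h : X -> int)
  (gK : cancel g ginv) (ginvK : cancel ginv g) n x y :
  iter n (skewF f g ginv h) (x, y) = (iter n f x, iterz g ginv (hsum f h n x) y).
Proof.
elim: n => [|n IH]; first by rewrite /hsum big_ord0.
rewrite iterS IH /skewF /= iterzD // /hsum big_ord_recr /= addrC.
by [].
Qed.

Lemma rt_le (R : realType) (X Y : Type) (dX : X -> X -> R) (dY : Y -> Y -> R)
  (f : X -> X) (g ginv : Y -> Y) (h : X -> int)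
  (gK : cancel g ginv) (ginvK : cancel ginv g) (hX : is_metric dX) (hY : is_metric dY) r x y :
  return_time (sup_metric dX dY) (skewF f g ginv h) r (x, y)
  <= Zext_return_time dX f h r x.
Proof.
apply: ereal_inf_le_tmp => _ [n [n0 [dn hn]] <-]; exists n => //; split => //.
rewrite iter_skewF // hn /sup_metric /=.
have [_ d0 _ _] := hY; have -> : dY y y = 0%R by apply/d0.
rewrite gt_max dn /= (le_lt_trans _ dn) //; by case: hX => + _ _ _; apply.
Qed.

Lemma rt_ge1 (R : realType) (T : Type) (d : T -> T -> R) (F : T -> T) r z :
  1 <= return_time d F r z.
Proof.
apply: le_ereal_inf_tmp => _ [n [n0 _] <-]; by rewrite lee_fin ler1n.
Qed.
Local Close Scope ereal_scope.

Theorem proposition2p1 (R : realType)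
  (dispX dispY : measure_display)
  (X : measurableType dispX) (Y : measurableType dispY)
  (dX : X -> X -> R) (dY : Y -> Y -> R)
  (mu : probability X R) (nu : probability Y R)
  (f : X -> X) (g ginv : Y -> Y) (h : X -> int) :
  is_metric dX -> is_metric dY ->
  totally_bounded dX -> totally_bounded dY ->
  borel_for dX -> borel_for dY ->
  ergodic mu f -> ergodic nu g ->
  cancel g ginv -> cancel ginv g -> measurable_fun setT ginv ->
  (forall k : int, measurable (h @^-1` [set k])) ->
  mu.-integrable setT (fun x => ((h x)%:~R : R)%:E) ->
  (\int[mu]_x ((h x)%:~R : R)%:E = 0)%E ->
  {ae mu, forall x : X, forall y : Y,
     (limsup_at0 (fun r => rec_ratio
         (return_time (sup_metric dX dY) (skewF f g ginv h) r (x, y)) r)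
      <= limsup_at0 (fun r => rec_ratio (Zext_return_time dX f h r x) r))%E}.
Proof.
move=> hX hY _ _ _ _ _ _ gK ginvK _ _ _ _.
apply: aeW => x y; apply: limf_esup_le.
near=> r; apply: rec_ratio_le.
- by near: r; exact: nbhs_right_gt.
- by apply/ltW; near: r; apply: nbhs_right_lt; exact: ltr01.
- exact: rt_ge1.
- exact: rt_le.
Unshelve. all: by end_near.
Qed.
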